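(* Let $n\ge 2$, $p>n+1$, and let $h_1,h_2$ be $C^2$ functions on $\{x'\in\mathbb{R}^{n-1}:|x'|<1\}$ satisfying $h_1(0')=h_2(0')=0$, $D_{x'}h_1(0')=D_{x'}h_2(0')=0$, and, for some constants $\kappa_1,\kappa_2>0$, $$\kappa_1 I_{n-1}\le D^2h_1(x')\le\kappa_2 I_{n-1},\qquad \kappa_1 I_{n-1}\le -D^2h_2(x')\le\kappa_2 I_{n-1}\quad\text{for } 0\le|x'|<1.$$ Let $\delta\in(0,p-n-1)$ and $\gamma\in\big(0,\frac{p-n-1-\delta}{p-1}\big)$, and set $v(x)=(|x'|^2+(2+\delta)x_n^2)^{\gamma/2}$. Then there exists $\mu\in(0,1/2)$ depending only on $n,p,\delta,\gamma,\kappa_1,\kappa_2$ and the modulus of continuity of $D^2h_1$ and $D^2h_2$ at $x'=0$, such that for every $\varepsilon\in(0,\mu^2/\kappa_2)$, $$-\operatorname{div}(|Dv|^{p-2}Dv)>0\ \text{ in }\Omega_{\mu/\kappa_2}\setminus\Omega_{\varepsilon/\mu},\qquad \frac{\partial v}{\partial\nu}>0\ \text{ on }(\Gamma_+\cup\Gamma_-)\cap\overline{\Omega}_{\mu/\kappa_2}.$$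
   Context: Points of $\mathbb{R}^n$ are written $x=(x',x_n)$ with $x'\in\mathbb{R}^{n-1}$. For $0<r\le 1$, $\Omega_r:=\{(x',x_n): |x'|<r,\ -\frac{\varepsilon}{2}+h_2(x')<x_n<\frac{\varepsilon}{2}+h_1(x')\}$. $\Gamma_+=\{x_n=\frac{\varepsilon}{2}+h_1(x'),\ |x'|<1\}$ and $\Gamma_-=\{x_n=-\frac{\varepsilon}{2}+h_2(x'),\ |x'|<1\}$. $\nu$ is the unit normal on $\Gamma_+$ pointing upwards (i.e. $\nu=(-D_{x'}h_1,1)/\sqrt{1+|D_{x'}h_1|^2}$) and on $\Gamma_-$ pointing downwards. *)

(* Defs.v *)
From HB Require Import structures.
From mathcomp Require Import all_boot all_order all_algebra.
From mathcomp Require Import all_classical all_reals all_analysis.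
Set Implicit Arguments. Unset Strict Implicit. Unset Printing Implicit Defensive.
Import Order.TTheory GRing.Theory Num.Theory.
Import numFieldNormedType.Exports.
Local Open Scope classical_set_scope.
Local Open Scope ring_scope.

Section Defs.
Variable R : realType.

Definition evec (k : nat) (i : 'I_k) : 'rV[R]_k := delta_mx 0 i.

Definition partial (k : nat) (f : 'rV[R]_k -> R) (i : 'I_k) (x : 'rV[R]_k) : R :=
  'D_(evec i) f x.

Definition grad (k : nat) (f : 'rV[R]_k -> R) (x : 'rV[R]_k) : 'rV[R]_k :=
  \row_i partial f i x.

Definition hessian (k : nat) (f : 'rV[R]_k -> R) (x : 'rV[R]_k) : 'M[R]_k :=
  \matrix_(i, j) partial (partial f j) i x.

Definition div (k : nat) (F : 'rV[R]_k -> 'rV[R]_k) (x : 'rV[R]_k) : R :=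
  \sum_i partial (fun y => F y 0 i) i x.

Definition enorm (k : nat) (u : 'rV[R]_k) : R := Num.sqrt (\sum_i u 0 i ^+ 2).

Definition plap (k : nat) (p : R) (f : 'rV[R]_k -> R) (x : 'rV[R]_k) : R :=
  div (fun y => (enorm (grad f y)) `^ (p - 2) *: grad f y) x.

Definition loewner_le (k : nat) (A B : 'M[R]_k) : Prop :=
  forall xi : 'rV[R]_k, 0 <= (xi *m (B - A) *m xi^T) 0 0.

Definition unit_ball (k : nat) : set 'rV[R]_k := [set y | enorm y < 1].

Definition C2_ball (k : nat) (h : 'rV[R]_k -> R) : Prop :=
  (forall y, unit_ball y -> differentiable h y) /\
  (forall i y, unit_ball y -> differentiable (partial h i) y) /\
  (forall i j, {within @unit_ball k, continuous (partial (partial h j) i)}).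

Definition is_modulus (omega : R -> R) : Prop :=
  (forall t, 0 <= t -> 0 <= omega t) /\ omega t @[t --> 0^'+] --> 0.

Definition hess_modulus_at0 (k : nat) (h : 'rV[R]_k -> R) (omega : R -> R) : Prop :=
  forall y, unit_ball y -> forall i j,
    `|hessian h y i j - hessian h 0 i j| <= omega (enorm y).

Definition xprime (m : nat) (x : 'rV[R]_m.+1) : 'rV[R]_m :=
  \row_i x 0 (widen_ord (leqnSn m) i).
Definition xlast (m : nat) (x : 'rV[R]_m.+1) : R := x 0 ord_max.

Definition Omega (m : nat) (h1 h2 : 'rV[R]_m -> R) (eps r : R) : set 'rV[R]_m.+1 :=
  [set x | enorm (xprime x) < r /\
           - eps / 2 + h2 (xprime x) < xlast x /\ xlast x < eps / 2 + h1 (xprime x)].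

Definition Gamma_plus (m : nat) (h1 : 'rV[R]_m -> R) (eps : R) : set 'rV[R]_m.+1 :=
  [set x | xlast x = eps / 2 + h1 (xprime x) /\ enorm (xprime x) < 1].
Definition Gamma_minus (m : nat) (h2 : 'rV[R]_m -> R) (eps : R) : set 'rV[R]_m.+1 :=
  [set x | xlast x = - eps / 2 + h2 (xprime x) /\ enorm (xprime x) < 1].

(* outward normals: upward on Gamma_+, downward on Gamma_- *)
Definition nu_plus (m : nat) (h1 : 'rV[R]_m -> R) (x : 'rV[R]_m.+1) : 'rV[R]_m.+1 :=
  (Num.sqrt (1 + enorm (grad h1 (xprime x)) ^+ 2))^-1 *:
  \row_(i < m.+1) (if unlift ord_max i is Some j then - grad h1 (xprime x) 0 j else 1).
Definition nu_minus (m : nat) (h2 : 'rV[R]_m -> R) (x : 'rV[R]_m.+1) : 'rV[R]_m.+1 :=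
  (Num.sqrt (1 + enorm (grad h2 (xprime x)) ^+ 2))^-1 *:
  \row_(i < m.+1) (if unlift ord_max i is Some j then grad h2 (xprime x) 0 j else -1).

Definition dnormal (k : nat) (v : 'rV[R]_k -> R) (nu : 'rV[R]_k) (x : 'rV[R]_k) : R :=
  \sum_i grad v x 0 i * nu 0 i.

Definition vfun (m : nat) (delta gamma : R) (x : 'rV[R]_m.+1) : R :=
  (enorm (xprime x) ^+ 2 + (2 + delta) * xlast x ^+ 2) `^ (gamma / 2).

End Defs.

(* Main.v *)
Require Import Defs.
From HB Require Import structures.
From mathcomp Require Import all_boot all_order all_algebra.
From mathcomp Require Import all_classical all_reals all_analysis.
From mathcomp Require Import ring lra.
Import Order.TTheory GRing.Theory Num.Theory.
Import numFieldNormedType.Exports.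
Local Open Scope classical_set_scope.
Local Open Scope ring_scope.
Set Implicit Arguments. Unset Strict Implicit.
Section C1.
Variable R : realType.

Lemma derive_line (V : normedModType R) (f : V -> R) (z y : V) (t0 : R) :
  'D_1 (fun t : R => f (z + t *: y)) t0 = 'D_y f (z + t0 *: y) /\
  (derivable (fun t : R => f (z + t *: y)) t0 1 <-> derivable f (z + t0 *: y) y).
Proof.
have E : (fun h : R => h^-1 *: (((fun t : R => f (z + t *: y)) \o shift t0) (h *: 1)
             - f (z + t0 *: y))) =
         (fun h : R => h^-1 *: ((f \o shift (z + t0 *: y)) (h *: y) - f (z + t0 *: y))).
  apply/funext => h /=; congr (_ *: (f _ - _)).
  rewrite /= scalerDl (_ : h%:A = h); last by rewrite /GRing.scale /= mulr1.
  by rewrite addrCA.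
by rewrite /derive /derivable /= E.
Qed.

Lemma is_derive_near (g g' : R -> R) (t0 l : R) :
  (\forall t \near t0, g t = g' t) -> is_derive t0 1 g' l -> is_derive t0 1 g l.
Proof.
move=> Hn [d1 d2].
have e0 : g t0 = g' t0 by exact: (nbhs_singleton Hn).
move: Hn => /nbhs_ballP [e ep He].
have H2 : \forall h \near (0:R)^', (fun h => h^-1 *: ((g \o shift t0) (h *: 1) - g t0)) h
   = (fun h => h^-1 *: ((g' \o shift t0) (h *: 1) - g' t0)) h.
  apply: cvg_within; exists e => //= h.
  rewrite /ball /= sub0r normrN => he.
  have hA : h%:A = h by rewrite /GRing.scale /= mulr1.
  rewrite hA He; first by rewrite e0.
  by rewrite /ball /= opprD addrCA subrr addr0 normrN.
have H2' : {near (0:R)^', (fun h => h^-1 *: ((g' \o shift t0) (h *: 1) - g' t0)) =1 (fun h => h^-1 *: ((g \o shift t0) (h *: 1) - g t0))}.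
  by apply: filterS H2 => h ->.
have H3 := near_eq_cvg H2'.
have cv : (fun h => h^-1 *: ((g' \o shift t0) (h *: 1) - g' t0)) @ (0:R)^' --> l.
  by rewrite -d2; exact: d1.
split.
  by apply/cvg_ex; exists l; apply: cvg_trans cv; exact: H3.
rewrite /derive; apply: cvg_lim => //.
by apply: cvg_trans cv; exact: H3.
Qed.


Lemma partial_line k (f : 'rV[R]_k -> R) i x (g : R -> R) (l : R) :
  (\forall t \near 0, f (x + t *: evec R i) = g t) -> is_derive (0:R) (1:R) g l ->
  partial f i x = l.
Proof.
move=> Hn Hd.
have := is_derive_near Hn Hd => -[_ D].
have [E _] := derive_line f x (evec R i) 0.
by rewrite /partial -D E scale0r addr0.
Qed.

Lemma D_diff_sum k (f : 'rV[R]_k -> R) z y : differentiable f z ->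
  'D_y f z = \sum_i y 0 i * partial f i z.
Proof.
move=> df; rewrite deriveE //.
rewrite {1}(row_sum_delta y) linear_sum; apply: eq_bigr => i _.
by rewrite linearZ /partial deriveE.
Qed.

Lemma is_derive_line k (f : 'rV[R]_k -> R) z y t0 :
  differentiable f (z + t0 *: y) ->
  is_derive t0 (1:R) (fun t : R => f (z + t *: y)) (\sum_i y 0 i * partial f i (z + t0 *: y)).
Proof.
move=> df; have [E1 E2] := derive_line f z y t0.
split; first by apply/E2; exact: diff_derivable.
by rewrite E1 D_diff_sum.
Qed.

End C1.

Section C2.
Variable R : realType.

Lemma is_derive_ext (g g' : R -> R) (x l : R) :
  (forall t, g t = g' t) -> is_derive x 1 g' l -> is_derive x 1 g l.
Proof. by move=> e; rewrite (_ : g = g') //; apply/funext. Qed.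

Lemma MVT01 (f df : R -> R) (a b : R) : a < b ->
  (forall x, a <= x <= b -> is_derive x 1 f (df x)) ->
  exists2 c, a < c < b & f b - f a = df c * (b - a).
Proof.
move=> ab Hd.
have cont : {within `[a, b], continuous f}.
  apply: continuous_in_subspaceT => x xab.
  have [dx _] : is_derive x 1 f (df x) by apply: Hd; move: xab; rewrite inE /= in_itv.

  by apply: differentiable_continuous; apply/derivable1_diffP.
have [c cab E] := @MVT R f df a b ab
   (fun x xab => Hd x (subset_itv_oo_cc xab)) cont.
by exists c => //; move: cab; rewrite in_itv.
Qed.

Lemma scaleE k (t : R) (y : 'rV[R]_k) i : (t *: y) 0 i = t * y 0 i.
Proof. by rewrite /GRing.scale /= /scalemx mxE. Qed.

Definition sq k (y : 'rV[R]_k) := \sum_i y 0 i ^+ 2.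
Definition qf k (y : 'rV[R]_k) (A : 'M[R]_k) := (y *m A *m y^T) 0 0.

Lemma sq_ge0 k (y : 'rV[R]_k) : 0 <= sq y.
Proof. by apply: sumr_ge0 => i _; exact: sqr_ge0. Qed.

Lemma enorm_sq k (y : 'rV[R]_k) : enorm y ^+ 2 = sq y.
Proof. by rewrite /enorm sqr_sqrtr // sq_ge0. Qed.

Lemma sq_scale k (t : R) (y : 'rV[R]_k) : sq (t *: y) = t ^+ 2 * sq y.
Proof. rewrite /sq mulr_sumr; apply: eq_bigr => i _.
rewrite scaleE.
by rewrite exprMn. Qed.

Lemma enorm_scale k (t : R) (y : 'rV[R]_k) : enorm (t *: y) = `|t| * enorm y.
Proof. by rewrite /enorm -/(sq _) sq_scale sqrtrM ?sqr_ge0 // sqrtr_sqr. Qed.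

Lemma qfE k (y : 'rV[R]_k) A : qf y A = \sum_i \sum_j y 0 i * A i j * y 0 j.
Proof.
rewrite /qf mxE [RHS]exchange_big; apply: eq_bigr => j _.
by rewrite !mxE mulr_suml.
Qed.

Lemma qfB k (y : 'rV[R]_k) A B : qf y (A - B) = qf y A - qf y B.
Proof. by rewrite /qf mulmxBr mulmxBl !mxE. Qed.

Lemma qfN k (y : 'rV[R]_k) A : qf y (- A) = - qf y A.
Proof. by rewrite /qf mulmxN mulNmx mxE. Qed.

Lemma qf_scalar k (y : 'rV[R]_k) (c : R) : qf y c%:M = c * sq y.
Proof.
rewrite qfE /sq mulr_sumr; apply: eq_bigr => i _.
rewrite (bigD1 i) //= big1 ?addr0; last first.
  by move=> j /negbTE ji; rewrite !mxE eq_sym ji mulr0 mul0r.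
by rewrite !mxE eqxx mulr1n; ring.
Qed.

Lemma loewner_qf k (A B : 'M[R]_k) : loewner_le A B -> forall y, qf y A <= qf y B.
Proof. by move=> H y; have := H y; rewrite -/(qf _ _) qfB subr_ge0. Qed.

Lemma qf_diff_bound k (y : 'rV[R]_k) (A B : 'M[R]_k) (eta : R) :
  (forall i j, `|A i j - B i j| <= eta) ->
  `|qf y A - qf y B| <= eta * k%:R * sq y.
Proof.
move=> H; rewrite -qfB qfE.
apply: (le_trans (ler_norm_sum _ _ _)).
apply: (@le_trans _ _ (\sum_i \sum_(j < k) eta * ((y 0 i ^+ 2 + y 0 j ^+ 2) / 2))).
  apply: ler_sum => i _; apply: (le_trans (ler_norm_sum _ _ _)).
  apply: ler_sum => j _.
  rewrite !mxE !normrM.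
  have h1 := H i j.
  have a0 := normr_ge0 (y 0 i); have b0 := normr_ge0 (y 0 j).
  have d0 := normr_ge0 (A i j - B i j).
  rewrite -[y 0 i ^+ 2]real_normK ?num_real // -[y 0 j ^+ 2]real_normK ?num_real //.
  set a := `|y 0 i|; set b := `|y 0 j|; set d := `|A i j - B i j|.
  have ab : 0 <= (a - b) ^+ 2 by exact: sqr_ge0.
  have e0 : 0 <= eta by apply: le_trans h1.
  have : a * d * b <= a * eta * b.
    by apply: ler_wpM2r => //; apply: ler_wpM2l.
  nra.
rewrite (eq_bigr (fun i => eta * ((k%:R * y 0 i ^+ 2 + sq y) / 2))); last first.
  move=> i _; rewrite -mulr_sumr -mulr_suml big_split /= sumr_const card_ord.
  by rewrite mulr_natl.
rewrite -mulr_sumr -mulr_suml big_split /= -mulr_sumr sumr_const card_ord -mulr_natl.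
rewrite /sq le_eqVlt; apply/orP; left; apply/eqP; by field.
Qed.

End C2.

Section C3.
Variable R : realType.
Variables (m : nat) (h : 'rV[R]_m -> R) (sg k1 k2 : R).
Hypothesis HC : C2_ball h.
Hypothesis H0 : h 0 = 0.
Hypothesis Hg : grad h 0 = 0.
Hypothesis Hq : forall y, unit_ball y -> forall xi,
  k1 * sq xi <= sg * qf xi (hessian h y) /\ sg * qf xi (hessian h y) <= k2 * sq xi.
Hypothesis k1p : 0 < k1.
Hypothesis k2p : 0 < k2.
Hypothesis Hsg : `|sg| = 1.
Variable y : 'rV[R]_m.
Hypothesis yb : enorm y < 1.

Definition phi (t : R) := h (t *: y).
Definition phi1 (t : R) := \sum_i y 0 i * partial h i (t *: y).
Definition phi2 (t : R) := qf y (hessian h (t *: y)).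

Lemma enorm_ge0 k (z : 'rV[R]_k) : 0 <= enorm z.
Proof. exact: sqrtr_ge0. Qed.

Lemma ball_t (t : R) : 0 <= t <= 1 -> unit_ball (t *: y).
Proof.
move=> /andP[t0 t1]; rewrite /unit_ball /= enorm_scale ger0_norm //.
apply: le_lt_trans yb; rewrite -[X in _ <= X]mul1r; apply: ler_wpM2r => //.
exact: enorm_ge0.
Qed.

Lemma d_phi (t : R) : 0 <= t <= 1 -> is_derive t 1 phi (phi1 t).
Proof.
move=> tb.
have df : differentiable h (0 + t *: y) by rewrite add0r; apply: HC.1; exact: ball_t.
have := is_derive_line df; rewrite add0r => D.
by apply: is_derive_ext D => s; rewrite /phi add0r.
Qed.

Lemma d_phi1 (t : R) : 0 <= t <= 1 -> is_derive t 1 phi1 (phi2 t).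
Proof.
move=> tb.
have D : forall i, is_derive t 1 (fun s => y 0 i * partial h i (s *: y))
   (y 0 i * \sum_j y 0 j * partial (partial h i) j (t *: y)).
  move=> i.
  have df : differentiable (partial h i) (0 + t *: y).
    by rewrite add0r; apply: HC.2.1; exact: ball_t.
  have := is_derive_line df; rewrite add0r => D.
  have := is_deriveZ (y 0 i) D => D2.
  by apply: is_derive_ext D2 => s /=; rewrite add0r.
have := is_derive_sum D => DS.
have E : phi2 t = \sum_i y 0 i * \sum_j y 0 j * partial (partial h i) j (t *: y).
  rewrite /phi2 qfE exchange_big; apply: eq_bigr => i _.
  rewrite mulr_sumr; apply: eq_bigr => j _.
  by rewrite /hessian mxE; ring.
rewrite E; apply: is_derive_ext DS => s.
by rewrite /phi1 fct_sumE.
Qed.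


Lemma phi_0 : phi 0 = 0.
Proof. by rewrite /phi scale0r. Qed.
Lemma phi_1 : phi 1 = h y.
Proof. by rewrite /phi scale1r. Qed.
Lemma phi1_0 : phi1 0 = 0.
Proof.
rewrite /phi1 scale0r big1 // => i _.
have : grad h 0 0 i = 0 by rewrite Hg mxE.
by rewrite mxE => ->; rewrite mulr0.
Qed.
Lemma phi1_1 : phi1 1 = \sum_i y 0 i * partial h i y.
Proof. by rewrite /phi1 scale1r. Qed.

Lemma taylor_up : sg * h y <= k2 * sq y.
Proof.
have [c /andP[c0 c1] E1] := @MVT01 R phi phi1 0 1 ltr01 d_phi.
have [d /andP[d0 dc] E2] := @MVT01 R phi1 phi2 0 c c0
   (fun t tb => d_phi1 (t:=t) (let: conj a b := andP tb in
      introT andP (conj a (le_trans b (ltW c1))))).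
move: E1 E2; rewrite phi_0 phi_1 phi1_0 !subr0 mulr1 => E1 E2.
rewrite E1 E2.
have [_ Hup] := Hq (ball_t (t:=d) (introT andP (conj (ltW d0) (ltW (lt_trans dc c1))))) y.
rewrite -/(phi2 d) in Hup.
have sq0 := sq_ge0 y.
have : 0 <= k2 * sq y by apply: mulr_ge0 => //; exact: ltW.
nra.
Qed.


Lemma key_arith (a k1' e M s q0 P Qc : R) : 2 < a -> 0 < s -> a * M * e < (a - 2) * k1' ->
  k1' * s <= q0 -> - (e * M * s) <= P - q0 -> Qc - q0 <= e * M * s -> 0 < (a - 1) * P - Qc.
Proof.
move=> a2 s0 Hk Hlo B1 B2.
have H1 : (a - 1) * (q0 - e * M * s) <= (a - 1) * P.
  by apply: ler_wpM2l; [lra | lra].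
have H2 : 0 < ((a - 2) * k1' - a * M * e) * s by apply: mulr_gt0 => //; lra.
have H3 : (a - 2) * (k1' * s) <= (a - 2) * q0 by apply: ler_wpM2l => //; lra.
have e1 : ((a - 2) * k1' - a * M * e) * s = (a - 2) * (k1' * s) - a * (e * M * s) by ring.
have e2 : (a - 1) * (q0 - e * M * s) = (a - 2) * q0 + q0 - a * (e * M * s) + e * M * s by ring.
rewrite e1 in H2; rewrite e2 in H1.
lra.
Qed.

Lemma normle (x w : R) : `|x| <= w -> - w <= x /\ x <= w.
Proof. by rewrite ler_norml => /andP. Qed.

Lemma in01 (c d : R) : 0 < d -> d < c -> c < 1 -> 0 <= d <= 1.
Proof. by move=> d0 dc c1; rewrite (ltW d0) (ltW (lt_trans dc c1)). Qed.

Lemma taylor_bd (a eta : R) : 2 < a ->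
  (forall t, 0 < t <= 1 -> forall i j,
     `|hessian h (t *: y) i j - hessian h 0 i j| <= eta) ->
  a * m%:R * eta < (a - 2) * k1 -> 0 < sq y ->
  0 < sg * (a * h y - \sum_i y 0 i * partial h i y).
Proof.
move=> a2 Heta Hk sq0.
pose chi t := a * (sg * phi t) - t * (sg * phi1 t).
pose dchi t := a * (sg * phi1 t) - (t * (sg * phi2 t) + sg * phi1 t).
have Dchi : forall t : R, 0 <= t <= 1 -> is_derive t 1 chi (dchi t).
  move=> t tb.
  have D1 := is_deriveZ a (is_deriveZ sg (d_phi tb)).
  have D2 := is_deriveM (@is_derive_id _ _ t 1) (is_deriveZ sg (d_phi1 tb)).
  have D3 := is_deriveB D1 D2.
  apply: is_derive_ext (is_derive_eq D3 _) => [s|] //=.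
  by rewrite /dchi /= /GRing.scale /=; ring.
have [c /andP[c0 c1] E1] := @MVT01 R chi dchi 0 1 ltr01 Dchi.
have [d /andP[d0 dc] E2] := @MVT01 R phi1 phi2 0 c c0
   (fun t tb => d_phi1 (t:=t) (let: conj a b := andP tb in
      introT andP (conj a (le_trans b (ltW c1))))).
move: E1 E2; rewrite /chi phi_0 phi_1 phi1_0 phi1_1 !subr0 mulr1 => E1 E2.
have -> : sg * (a * h y - \sum_i y 0 i * partial h i y) = dchi c.
  by rewrite -E1; ring.
rewrite /dchi E2.
have b0 : unit_ball (0 : 'rV[R]_m).
  rewrite /unit_ball /= /enorm /= big1 ?sqrtr0 // => i _.
  by rewrite mxE expr0n.
have [Hlo _] := Hq b0 y.
have Bd : forall t : R, 0 < t < 1 -> `|sg * phi2 t - sg * qf y (hessian h 0)| <= eta * m%:R * sq y.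
  move=> t /andP[t0 t1]; rewrite -mulrBr normrM Hsg mul1r.
  rewrite /phi2; apply: qf_diff_bound => i j; apply: Heta; by rewrite t0 ltW.
have Bc := Bd c (introT andP (conj c0 c1)).
have Bdd := Bd d (introT andP (conj d0 (lt_trans dc c1))).
have [Bc1 Bc2] := normle Bc.
have [Bd1 Bd2] := normle Bdd.
move: Bc1 Bc2 Bd1 Bd2 Hlo; move: (phi2 c) (phi2 d) (qf y (hessian h 0)).
move=> pc pd q0 Bc1 Bc2 Bd1 Bd2 Hlo.
have L := key_arith a2 sq0 Hk Hlo Bd1 Bc2.
have -> : a * (sg * (pd * c)) - (c * (sg * pc) + sg * (pd * c)) = c * ((a - 1) * (sg * pd) - sg * pc).
  by ring.
exact: mulr_gt0.
Qed.

End C3.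

Section C4.
Variable R : realType.

Lemma is_derive_quad (A B C x : R) :
  is_derive x 1 (fun t : R => A + B * t + C * t ^+ 2) (B + 2 * C * x).
Proof.
have D := is_deriveD (is_deriveD (is_derive_cst A x 1) (is_deriveZ B (is_derive_id x (1:R))))
   (is_deriveZ C (is_deriveX 2 (is_derive_id x (1:R)))).
apply: is_derive_ext (is_derive_eq D _) => [t|] /=.
  by rewrite /GRing.scale /=.
rewrite /GRing.scale /=; ring.
Qed.

Lemma near_pos_quad (A B C : R) : 0 < A ->
  \forall t \near (0:R), 0 < A + B * t + C * t ^+ 2.
Proof.
move=> A0.
have [d _] := is_derive_quad A B C 0.
have cont := differentiable_continuous (proj1 (derivable1_diffP _ _) d).
apply: (cvgr_gt _ cont).
by rewrite mulr0 expr0n /= mulr0 !addr0.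
Qed.

End C4.

Section C5.
Variable R : realType.

Definition Sq k (w : 'I_k -> R) (y : 'rV[R]_k) := \sum_j w j * y 0 j ^+ 2.
Definition cc m (a : R) (j : 'I_m.+1) : R := if j == ord_max then a else 1.

Lemma ev_entry k (i j : 'I_k) : evec R i 0 j = (i == j)%:R.
Proof. by rewrite /evec mxE eqxx /= eq_sym. Qed.

Lemma line_entry k (y : 'rV[R]_k) (t : R) i j :
  (y + t *: evec R i) 0 j = y 0 j + t * (i == j)%:R.
Proof. by rewrite mxE scaleE ev_entry. Qed.

Lemma Sq_line k w (y : 'rV[R]_k) i (t : R) :
  Sq w (y + t *: evec R i) = Sq w y + (2 * w i * y 0 i) * t + w i * t ^+ 2.
Proof.
rewrite /Sq (bigD1 i) //= [in RHS](bigD1 i) //= line_entry eqxx.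
have -> : \sum_(j < k | j != i) w j * (y + t *: evec R i) 0 j ^+ 2 =
          \sum_(j < k | j != i) w j * y 0 j ^+ 2.
  apply: eq_bigr => j ji; rewrite line_entry eq_sym (negbTE ji) mulr0 addr0 //.
have e1 : (true%:R : R) = 1 by []. rewrite e1 mulr1; ring.
Qed.

Lemma widen_neq_max m (j : 'I_m) : (widen_ord (leqnSn m) j == ord_max) = false.
Proof. by rewrite -val_eqE /= ltn_eqF. Qed.

Lemma Sq_split m (w : 'I_m.+1 -> R) (y : 'rV[R]_m.+1) :
  (forall j : 'I_m, w (widen_ord (leqnSn m) j) = 1) ->
  Sq w y = enorm (xprime y) ^+ 2 + w ord_max * xlast y ^+ 2.
Proof.
move=> H; rewrite /Sq big_ord_recr /= enorm_sq /sq /xlast; congr (_ + _).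
by apply: eq_bigr => j _; rewrite H mul1r mxE.
Qed.

Lemma cc_widen m (a : R) (j : 'I_m) : cc a (widen_ord (leqnSn m) j) = 1.
Proof. by rewrite /cc widen_neq_max. Qed.

Lemma vfunQ m (delta gamma : R) (y : 'rV[R]_m.+1) :
  vfun delta gamma y = Sq (cc (2 + delta)) y `^ (gamma / 2).
Proof. by rewrite /vfun Sq_split; [rewrite /cc eqxx | exact: cc_widen]. Qed.

Lemma partial_v m (delta gamma : R) (y : 'rV[R]_m.+1) j :
  0 < Sq (cc (2 + delta)) y ->
  partial (vfun delta gamma) j y =
    gamma * Sq (cc (2 + delta)) y `^ (gamma / 2 - 1) * (cc (2 + delta) j * y 0 j).
Proof.
set Q := Sq _ y => Q0.
pose A := Q; pose B := 2 * cc (2 + delta) j * y 0 j; pose C := cc (2 + delta) j.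
have P0 : 0 < A + B * 0 + C * 0 ^+ 2 by rewrite mulr0 expr0n /= mulr0 !addr0.
have D := is_derive1_comp (f := fun z : R => z `^ (gamma / 2)) (g := fun t : R => A + B * t + C * t ^+ 2) (x := 0) (is_derive1_powR (gamma / 2) P0) (is_derive_quad A B C 0).
apply: (partial_line (g := (fun z : R => z `^ (gamma / 2)) \o (fun t : R => A + B * t + C * t ^+ 2))).
  by apply: filterE => t; rewrite vfunQ Sq_line.
apply: is_derive_eq D _.
rewrite mulr0 expr0n /= mulr0 !addr0 /B /A /Q; rewrite mulr0 addr0; by field.
Qed.


Definition Ffield m (p delta gamma : R) (y : 'rV[R]_m.+1) :=
  enorm (grad (vfun delta gamma) y) `^ (p - 2) *: grad (vfun delta gamma) y.

Lemma grad_v m (delta gamma : R) (y : 'rV[R]_m.+1) j :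
  0 < Sq (cc (2 + delta)) y ->
  grad (vfun delta gamma) y 0 j =
    gamma * Sq (cc (2 + delta)) y `^ (gamma / 2 - 1) * (cc (2 + delta) j * y 0 j).
Proof. by move=> Q0; rewrite mxE partial_v. Qed.

Lemma F_entry m (p delta gamma : R) (y : 'rV[R]_m.+1) i :
  0 < gamma -> 0 < Sq (cc (2 + delta)) y ->
  Ffield p delta gamma y 0 i =
   gamma `^ (p - 2) * gamma *
   Sq (cc (2 + delta)) y `^ ((gamma / 2 - 1) * (p - 2) + (gamma / 2 - 1)) *
   Sq (fun j => cc (2 + delta) j ^+ 2) y `^ (2^-1 * (p - 2)) *
   (cc (2 + delta) i * y 0 i).
Proof.
move=> g0 Q0.
set Q := Sq _ y in Q0 *; set W := Sq _ y; set e := gamma / 2 - 1.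
have ge : 0 <= gamma * Q `^ e by apply: mulr_ge0; [exact: ltW | exact: powR_ge0].
have En : enorm (grad (vfun delta gamma) y) = gamma * Q `^ e * Num.sqrt W.
  rewrite /enorm (eq_bigr (fun j => (gamma * Q `^ e) ^+ 2 * (cc (2 + delta) j ^+ 2 * y 0 j ^+ 2))); last first.
    by move=> j _; rewrite grad_v //; ring.
  rewrite -mulr_sumr sqrtrM ?sqr_ge0 // sqrtr_sqr ger0_norm //.
rewrite /Ffield scaleE grad_v // En.
rewrite powRM ?sqrtr_ge0 // powRM ?powR_ge0 //; last exact: ltW.
rewrite -powR12_sqrt; last by apply: sumr_ge0 => j _; apply: mulr_ge0; exact: sqr_ge0.
rewrite -!powRrM -/Q -/e (@powRD _ Q (e * (p - 2)) e); last by apply/implyP => _; rewrite gt_eqF.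
ring.
Qed.


Lemma partial_F m (p delta gamma : R) (x : 'rV[R]_m.+1) i :
  0 < gamma -> 0 < Sq (cc (2 + delta)) x -> 0 < Sq (fun j => cc (2 + delta) j ^+ 2) x ->
  let c := cc (2 + delta) i in
  let Q := Sq (cc (2 + delta)) x in
  let W := Sq (fun j => cc (2 + delta) j ^+ 2) x in
  let al := (gamma / 2 - 1) * (p - 2) + (gamma / 2 - 1) in
  let be := 2^-1 * (p - 2) in
  let K := gamma `^ (p - 2) * gamma in
  partial (fun y => Ffield p delta gamma y 0 i) i x =
   K * (al * Q `^ (al - 1) * (2 * c * x 0 i) * W `^ be * (c * x 0 i)
        + Q `^ al * (be * W `^ (be - 1) * (2 * c ^+ 2 * x 0 i)) * (c * x 0 i)
        + Q `^ al * W `^ be * c).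
Proof.
move=> g0 Q0 W0 c Q W al be K.
pose qB := 2 * c * x 0 i; pose wB := 2 * c ^+ 2 * x 0 i.
have P1 : 0 < Q + qB * 0 + c * 0 ^+ 2 by rewrite mulr0 expr0n /= mulr0 !addr0.
have P2 : 0 < W + wB * 0 + c ^+ 2 * 0 ^+ 2 by rewrite mulr0 expr0n /= mulr0 !addr0.
have D1 := is_derive1_comp (f := fun z : R => z `^ al) (g := fun t : R => Q + qB * t + c * t ^+ 2) (x := 0)
  (is_derive1_powR al P1) (is_derive_quad Q qB c 0).
have D2 := is_derive1_comp (f := fun z : R => z `^ be) (g := fun t : R => W + wB * t + c ^+ 2 * t ^+ 2) (x := 0)
  (is_derive1_powR be P2) (is_derive_quad W wB (c ^+ 2) 0).
have D3 := is_derive_quad (c * x 0 i) c 0 0.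
have Dg := is_deriveM (is_deriveM (is_deriveZ K D1) D2) D3.
apply: (partial_line (g := fun t : R => K * (Q + qB * t + c * t ^+ 2) `^ al *
   (W + wB * t + c ^+ 2 * t ^+ 2) `^ be * (c * x 0 i + c * t + 0 * t ^+ 2))).
  have := near_pos_quad qB c Q0; apply: filterS => t qt.
  rewrite F_entry //; last by rewrite Sq_line.
  rewrite !Sq_line line_entry eqxx /= -/Q -/W -/c -/al -/be -/K /qB /wB.
  have e1 : (true%:R : R) = 1 by [].
  by rewrite e1 mulr1 mul0r addr0 mulrDr.
apply: is_derive_ext (is_derive_eq Dg _) => [t|] /=.
  by rewrite /GRing.scale /=.
rewrite /GRing.scale /= !mulr0 !expr0n /= !mulr0 !addr0 /qB /wB.
rewrite !fctE /= /GRing.scale /= !mulr0 !expr0n /= !mulr0 !addr0. ring.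
Qed.


Lemma sum_cc m (a : R) : \sum_(i < m.+1) cc a i = m%:R + a.
Proof.
rewrite big_ord_recr /= (eq_bigr (fun _ => 1)) ?sumr_const ?card_ord; last by move=> j _; exact: cc_widen.
by rewrite /cc eqxx.
Qed.

Lemma powR_m1 (Q r : R) : 0 < Q -> Q `^ (r - 1) = Q `^ r / Q.
Proof.
move=> Q0; rewrite powRB ?powRr1 //; first exact: ltW.
by apply/implyP => _; rewrite gt_eqF.
Qed.

Lemma plap_v m (p delta gamma : R) (x : 'rV[R]_m.+1) :
  0 < gamma -> 0 < Sq (cc (2 + delta)) x -> 0 < Sq (fun j => cc (2 + delta) j ^+ 2) x ->
  let Q := Sq (cc (2 + delta)) x in
  let W := Sq (fun j => cc (2 + delta) j ^+ 2) x in
  let Z := Sq (fun j => cc (2 + delta) j ^+ 3) x in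
  let al := (gamma / 2 - 1) * (p - 2) + (gamma / 2 - 1) in
  let be := 2^-1 * (p - 2) in
  let K := gamma `^ (p - 2) * gamma in
  plap p (vfun delta gamma) x =
   K * Q `^ al * W `^ be * (2 * al * W / Q + 2 * be * Z / W + (m%:R + (2 + delta))).
Proof.
move=> g0 Q0 W0 Q W Z al be K.
rewrite /plap /div.
rewrite (eq_bigr (fun i => K * Q `^ al * W `^ be *
   (2 * al / Q * (cc (2 + delta) i ^+ 2 * x 0 i ^+ 2)
    + 2 * be / W * (cc (2 + delta) i ^+ 3 * x 0 i ^+ 2) + cc (2 + delta) i))); last first.
  move=> i _; rewrite (partial_F p i g0 Q0 W0) -/Q -/W -/al -/be -/K.
  rewrite !powR_m1 //.
  move: (Q `^ al) (W `^ be) => qa wb.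
  field.
  by rewrite (gt_eqF Q0) (gt_eqF W0).
rewrite -mulr_sumr !big_split /= -!mulr_sumr sum_cc.
rewrite -/Q -/W -/Z.
congr (_ * _); rewrite /Q /W /Z /Sq.
by field; rewrite -/(Sq _ x) (gt_eqF Q0) (gt_eqF W0).
Qed.


Lemma unlift_widen m (j : 'I_m) : unlift ord_max (widen_ord (leqnSn m) j) = Some j.
Proof.
have [|j' E ->] := @unlift_some _ ord_max (widen_ord (leqnSn m) j).
  by rewrite eq_sym widen_neq_max.
congr Some; apply: val_inj => /=.
by move: E => /(congr1 val) /=; rewrite /bump leqNgt ltn_ord add0n => ->.
Qed.

Lemma dnormal_plus m (delta gamma : R) (h1 : 'rV[R]_m -> R) (x : 'rV[R]_m.+1) :
  0 < Sq (cc (2 + delta)) x ->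
  dnormal (vfun delta gamma) (nu_plus h1 x) x =
  (Num.sqrt (1 + enorm (grad h1 (xprime x)) ^+ 2))^-1 *
  (gamma * Sq (cc (2 + delta)) x `^ (gamma / 2 - 1)) *
  ((2 + delta) * xlast x - \sum_j xprime x 0 j * partial h1 j (xprime x)).
Proof.
move=> Q0; rewrite /dnormal big_ord_recr /= grad_v // /nu_plus scaleE mxE unlift_none.
rewrite /cc eqxx.
rewrite (eq_bigr (fun j : 'I_m => - ((Num.sqrt (1 + enorm (grad h1 (xprime x)) ^+ 2))^-1 *
  (gamma * Sq (cc (2 + delta)) x `^ (gamma / 2 - 1)) * (xprime x 0 j * partial h1 j (xprime x))))); last first.
  move=> j _; rewrite grad_v // scaleE mxE unlift_widen -/(cc _ _) cc_widen !mxE; ring.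
rewrite sumrN -mulr_sumr /xlast; ring.
Qed.

Lemma dnormal_minus m (delta gamma : R) (h2 : 'rV[R]_m -> R) (x : 'rV[R]_m.+1) :
  0 < Sq (cc (2 + delta)) x ->
  dnormal (vfun delta gamma) (nu_minus h2 x) x =
  (Num.sqrt (1 + enorm (grad h2 (xprime x)) ^+ 2))^-1 *
  (gamma * Sq (cc (2 + delta)) x `^ (gamma / 2 - 1)) *
  (\sum_j xprime x 0 j * partial h2 j (xprime x) - (2 + delta) * xlast x).
Proof.
move=> Q0; rewrite /dnormal big_ord_recr /= grad_v // /nu_minus scaleE mxE unlift_none.
rewrite /cc eqxx.
rewrite (eq_bigr (fun j : 'I_m => ((Num.sqrt (1 + enorm (grad h2 (xprime x)) ^+ 2))^-1 *
  (gamma * Sq (cc (2 + delta)) x `^ (gamma / 2 - 1)) * (xprime x 0 j * partial h2 j (xprime x))))); last first.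
  move=> j _; rewrite grad_v // scaleE mxE unlift_widen -/(cc _ _) cc_widen !mxE; ring.
rewrite -mulr_sumr /xlast; ring.
Qed.

End C5.

Section C6.
Variable R : realType.

Lemma cont_sumsq m : continuous (fun z : 'rV[R]_m.+1 =>
   \sum_(i < m) z 0 (widen_ord (leqnSn m) i) ^+ 2).
Proof.
rewrite -(fct_sumE _ _ (fun i (z : 'rV[R]_m.+1) => z 0 (widen_ord (leqnSn m) i) ^+ 2)).
elim/big_ind: _ => [|f g cf cg|i _].
- exact: cst_continuous.
- by move=> z; apply: continuousD; [exact: cf | exact: cg].
- move=> z.
  have cc0 := @coord_continuous R 1 m.+1 0 (widen_ord (leqnSn m) i).
  rewrite (_ : (fun z0 : 'rV[R]_m.+1 => z0 0 (widen_ord (leqnSn m) i) ^+ 2) =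
      (fun z0 => z0 0 (widen_ord (leqnSn m) i)) * (fun z0 => z0 0 (widen_ord (leqnSn m) i))).
    by apply: continuousM; apply: cc0.
  by apply/funext => z0; rewrite /= expr2.
Qed.

Lemma cont_enorm_xprime m : continuous (fun z : 'rV[R]_m.+1 => enorm (xprime z)).
Proof.
rewrite (_ : (fun z : 'rV[R]_m.+1 => enorm (xprime z)) =
   Num.sqrt \o (fun z : 'rV[R]_m.+1 => \sum_(i < m) z 0 (widen_ord (leqnSn m) i) ^+ 2)).
  move=> z; apply: continuous_comp; first exact: cont_sumsq.
  exact: sqrt_continuous.
apply/funext => z; rewrite /enorm /=; congr Num.sqrt.
by apply: eq_bigr => i _; rewrite mxE.
Qed.

Lemma closure_Omega m (h1 h2 : 'rV[R]_m -> R) (eps r : R) (x : 'rV[R]_m.+1) :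
  closure (Omega h1 h2 eps r) x -> enorm (xprime x) <= r.
Proof.
move=> cx.
have C : closed ((fun z : 'rV[R]_m.+1 => enorm (xprime z)) @^-1` [set z | z <= r]).
  apply: preimage_closed; last exact: closed_le.
  by move=> z _; apply: cont_enorm_xprime.
have S : Omega h1 h2 eps r `<=` (fun z : 'rV[R]_m.+1 => enorm (xprime z)) @^-1` [set z | z <= r].
  by move=> z [Hz _] /=; exact: ltW.
have := closureS S cx; rewrite -(proj1 (closure_id _) C); done.
Qed.


Lemma modulus_small (omega : R -> R) (eta : R) : is_modulus omega -> 0 < eta ->
  exists2 r0, 0 < r0 & forall t, 0 < t -> t < r0 -> omega t < eta.
Proof.
move=> [_ Hm] e0.
have H : \forall t \near 0^'+, omega t < eta := cvgr_lt _ Hm _ e0.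
have H' : nbhs (0:R) (fun t => 0 < t -> omega t < eta) := H (at_right_proper_filter 0).
move: H' => /nbhs_ballP [e ep He].
exists e => // t t0 te.
apply: (He t) => //.
by rewrite /ball /= sub0r normrN gtr0_norm.
Qed.

Lemma sq_eq0 k (y : 'rV[R]_k) : sq y = 0 -> y = 0.
Proof.
move=> /eqP; rewrite psumr_eq0; last by move=> i _; exact: sqr_ge0.
move=> /allP H; apply/rowP => i; rewrite mxE.
by have := H i (mem_index_enum _); rewrite /= sqrf_eq0 => /eqP.
Qed.

Lemma Sq_pow m (a : R) (n : nat) (y : 'rV[R]_m.+1) :
  Sq (fun j => cc a j ^+ n) y = enorm (xprime y) ^+ 2 + a ^+ n * xlast y ^+ 2.
Proof.
rewrite Sq_split; first by rewrite /cc eqxx.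
by move=> j; rewrite cc_widen expr1n.
Qed.

Lemma sign_T (al2 be2 N a s u eps : R) :
  let c' := - (al2 + be2 + N) in
  let Bc := 2 * a ^+ 2 * al2 + be2 * (a ^+ 3 + a) + N * (a ^+ 2 + a) in
  let Cc := (al2 + be2) * a ^+ 4 + N * a ^+ 3 in
  0 < c' -> 0 < s -> 0 <= u -> u <= eps * s -> 0 <= eps -> eps <= 1 ->
  eps * (`|Bc| + `|Cc|) < c' ->
  al2 * (s + a ^+ 2 * u) ^+ 2 + be2 * (s + a ^+ 3 * u) * (s + a * u)
   + N * (s + a * u) * (s + a ^+ 2 * u) < 0.
Proof.
move=> c' Bc Cc c0 s0 u0 ue e0 e1 He.
have E : al2 * (s + a ^+ 2 * u) ^+ 2 + be2 * (s + a ^+ 3 * u) * (s + a * u)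
   + N * (s + a * u) * (s + a ^+ 2 * u) = - c' * s ^+ 2 + Bc * (s * u) + Cc * (u ^+ 2).
  rewrite /c' /Bc /Cc; ring.
rewrite E.
have su0 : 0 <= s * u by apply: mulr_ge0 => //; exact: ltW.
have su : s * u <= eps * s ^+ 2.
  have -> : eps * s ^+ 2 = s * (eps * s) by ring.
  by apply: ler_wpM2l => //; exact: ltW.
have H1 : Bc * (s * u) <= `|Bc| * (eps * s ^+ 2).
  apply: le_trans (ler_norm _) _; rewrite normrM (ger0_norm su0).
  by apply: ler_wpM2l.
have H2 : Cc * (u ^+ 2) <= `|Cc| * (eps * s ^+ 2).
  apply: le_trans (ler_norm _) _; rewrite normrM (ger0_norm (sqr_ge0 u)).
  apply: ler_wpM2l => //.
  have uu : u ^+ 2 <= u * (eps * s) by rewrite expr2; apply: ler_wpM2l.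
  apply: (le_trans uu).
  have -> : eps * s ^+ 2 = (eps * s) * s by ring.
  rewrite [u * _]mulrC; apply: ler_wpM2l; first by apply: mulr_ge0 => //; exact: ltW.
  apply: (le_trans ue); rewrite -{2}(mul1r s); apply: ler_wpM2r => //; exact: ltW.
have s2 : 0 < s ^+ 2 by exact: exprn_gt0.
have H3 : (`|Bc| + `|Cc|) * (eps * s ^+ 2) < c' * s ^+ 2.
  by rewrite mulrA [_ * eps]mulrC ltr_pM2r.
move: H1 H2 H3; move: (`|Bc|) (`|Cc|) (eps * s ^+ 2) (Bc * (s * u)) (Cc * u ^+ 2) => x1 x2 x3 x4 x5.
move=> H1 H2 H3; rewrite mulrDl in H3; lra.
Qed.

End C6.


Lemma Sq_cc (R : realType) m (a : R) (y : 'rV[R]_m.+1) :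
  Sq (cc a) y = enorm (xprime y) ^+ 2 + a * xlast y ^+ 2.
Proof. by rewrite Sq_split; [rewrite /cc eqxx | exact: cc_widen]. Qed.

Unset Implicit Arguments. Set Strict Implicit.

Theorem lemma4p1 (R : realType) (m : nat) (p delta gamma k1 k2 : R)
    (omega : R -> R) :
  (1 <= m)%N ->
  (m.+2)%:R < p ->
  0 < k1 -> 0 < k2 ->
  0 < delta -> delta < p - (m.+2)%:R ->
  0 < gamma -> gamma < (p - (m.+2)%:R - delta) / (p - 1) ->
  is_modulus omega ->
  exists mu : R, 0 < mu /\ mu < 1 / 2 /\ mu <= k2 /\
    forall h1 h2 : 'rV[R]_m -> R,
      C2_ball h1 -> C2_ball h2 ->
      h1 0 = 0 -> h2 0 = 0 ->
      grad h1 0 = 0 -> grad h2 0 = 0 ->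
      (forall y, unit_ball y ->
         loewner_le (k1%:M) (hessian h1 y) /\ loewner_le (hessian h1 y) (k2%:M)) ->
      (forall y, unit_ball y ->
         loewner_le (k1%:M) (- hessian h2 y) /\ loewner_le (- hessian h2 y) (k2%:M)) ->
      hess_modulus_at0 h1 omega -> hess_modulus_at0 h2 omega ->
      forall eps : R, 0 < eps -> eps < mu ^+ 2 / k2 ->
        (forall x, Omega h1 h2 eps (mu / k2) x -> ~ Omega h1 h2 eps (eps / mu) x ->
           0 < - plap p (vfun delta gamma) x) /\
        (forall x, Gamma_plus h1 eps x -> closure (Omega h1 h2 eps (mu / k2)) x ->
           0 < dnormal (vfun delta gamma) (nu_plus h1 x) x) /\
        (forall x, Gamma_minus h2 eps x -> closure (Omega h1 h2 eps (mu / k2)) x ->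
           0 < dnormal (vfun delta gamma) (nu_minus h2 x) x).
Proof.
move=> m1 pm k1p k2p d0 dp g0 gp Hom.
have mR : (m.+2)%:R = m%:R + 2 :> R by rewrite -addn2 natrD.
have m0 : 0 < m%:R :> R by rewrite ltr0n.
have p1 : 0 < p - 1 by rewrite mR in pm; lra.
pose a := 2 + delta.
have a2 : 2 < a by rewrite /a; lra.
have a0 : 0 < a by lra.
pose al2 := (gamma - 2) * (p - 1).
pose be2 := p - 2.
pose N := m%:R + a.
pose c' := - (al2 + be2 + N).
have c0 : 0 < c'.
  move: gp; rewrite ltr_pdivlMr // => gp.
  rewrite /c' /al2 /be2 /N /a; rewrite mR in gp; lra.
pose Bc := 2 * a ^+ 2 * al2 + be2 * (a ^+ 3 + a) + N * (a ^+ 2 + a).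
pose Cc := (al2 + be2) * a ^+ 4 + N * a ^+ 3.
pose eta := (a - 2) * k1 / (2 * a * m%:R).
have eta0 : 0 < eta.
  by rewrite /eta; apply: divr_gt0; [apply: mulr_gt0; lra | apply: mulr_gt0 => //; lra].
have Heta : a * m%:R * eta < (a - 2) * k1.
  have -> : a * m%:R * eta = (a - 2) * k1 / 2.
    rewrite /eta; field.
    by rewrite (gt_eqF a0) (gt_eqF m0).
  have : 0 < (a - 2) * k1 by apply: mulr_gt0 => //; lra.
  lra.
have [r0 r0p Hr0] := modulus_small Hom eta0.
pose D := 2 * (`|Bc| + `|Cc| + 1).
have D0 : 0 < D by rewrite /D; have := normr_ge0 Bc; have := normr_ge0 Cc; lra.
pose mu := Num.min (1/4) (Num.min (k2 / 2) (Num.min (c' / D) (k2 * r0 / 2))).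
have mu0 : 0 < mu.
  rewrite /mu !lt_min; apply/and4P; split.
  - lra.
  - lra.
  - exact: divr_gt0.
  - by apply: divr_gt0 => //; apply: mulr_gt0.
have mu1 : mu <= 1/4 by rewrite /mu ge_min lexx.
have mu2 : mu <= k2 / 2 by rewrite /mu !ge_min lexx orbT.
have mu3 : mu <= c' / D by rewrite /mu !ge_min lexx !orbT.
have mu4 : mu <= k2 * r0 / 2 by rewrite /mu !ge_min lexx !orbT.
exists mu; split => //; split; first lra.
split; first lra.
move=> h1 h2 C1 C2 h10 h20 g10 g20 Hh1 Hh2 M1 M2 eps e0 epsmu.
have Hq1 : forall y, unit_ball y -> forall xi,
    k1 * sq xi <= 1 * qf xi (hessian h1 y) /\ 1 * qf xi (hessian h1 y) <= k2 * sq xi.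
  move=> y yb xi; have [L U] := Hh1 y yb; rewrite mul1r -!qf_scalar.
  by split; apply: loewner_qf.
have Hq2 : forall y, unit_ball y -> forall xi,
    k1 * sq xi <= -1 * qf xi (hessian h2 y) /\ -1 * qf xi (hessian h2 y) <= k2 * sq xi.
  move=> y yb xi; have [L U] := Hh2 y yb; rewrite mulN1r -qfN -!qf_scalar.
  by split; apply: loewner_qf.
have n1 : `|1 : R| = 1 := normr1 _.
have n2 : `|-1 : R| = 1 by rewrite normrN normr1.
have mk1 : mu / k2 <= 1 / 2 by rewrite ler_pdivrMr //; lra.
have mk0 : mu / k2 < r0.
  rewrite ltr_pdivrMr //.
  have : 0 < k2 * r0 by apply: mulr_gt0.
  lra.
have HE : forall h, hess_modulus_at0 h omega -> forall y : 'rV[R]_m, enorm y < 1 ->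
    enorm y < r0 -> 0 < sq y -> forall t : R, 0 < t <= 1 -> forall i j,
    `|hessian h (t *: y) i j - hessian h 0 i j| <= eta.
  move=> h M y y1 yr sy t /andP[t0 t1] i j.
  have tb : 0 <= t <= 1 by rewrite (ltW t0) t1.
  apply: le_trans (M _ (ball_t y1 tb) i j) _.
  apply: ltW; apply: Hr0; rewrite enorm_scale ger0_norm; try exact: ltW.
    by apply: mulr_gt0 => //; rewrite /enorm sqrtr_gt0.
  apply: le_lt_trans yr; rewrite -[X in _ <= X]mul1r; apply: ler_wpM2r => //.
  exact: enorm_ge0.
split.
  move=> x [Hr [Hlo Hhi]] Hn.
  set r := enorm (xprime x) in Hr Hn *.
  have Hr2 : eps / mu <= r.
    by rewrite leNgt; apply/negP => H; apply: Hn.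
  have emu : eps <= r * mu by rewrite -ler_pdivrMr.
  have rp : 0 < r by apply: lt_le_trans Hr2; exact: divr_gt0.
  have r1 : enorm (xprime x) < 1 by apply: lt_le_trans Hr _; lra.
  have T1 := taylor_up C1 h10 g10 Hq1 k2p r1.
  have T2 := taylor_up C2 h20 g20 Hq2 k2p r1.
  rewrite -enorm_sq -/r in T1 T2.
  have kr : k2 * r ^+ 2 <= mu * r.
    rewrite expr2 mulrA; apply: ler_wpM2r; first exact: ltW.
    by apply: ltW; move: Hr; rewrite ltr_pdivlMr // mulrC.
  set xn := xlast x in Hlo Hhi *.
  have Hxn : `|xn| <= 2 * mu * r.
    rewrite ler_norml; apply/andP; split.
      have : 0 <= mu * r by apply: mulr_ge0; exact: ltW.
      lra.
    have : 0 <= mu * r by apply: mulr_ge0; exact: ltW.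
    lra.
  have Hu : xn ^+ 2 <= (4 * mu ^+ 2) * r ^+ 2.
    rewrite -real_normK ?num_real //.
    apply: le_trans (_ : (2 * mu * r) ^+ 2 <= _).
      by rewrite ler_sqr ?nnegrE //; apply: mulr_ge0; [apply: mulr_ge0; lra | exact: ltW].
    by rewrite le_eqVlt; apply/orP; left; apply/eqP; ring.
  have s0 : 0 < r ^+ 2 by exact: exprn_gt0.
  have mu44 : 4 * mu ^+ 2 <= mu.
    rewrite expr2 mulrA; rewrite -[X in _ <= X]mul1r; apply: ler_wpM2r; lra.
  have e40 : 0 <= 4 * mu ^+ 2 by apply: mulr_ge0 => //; exact: sqr_ge0.
  have e41 : 4 * mu ^+ 2 <= 1 by lra.
  have e42 : 4 * mu ^+ 2 * (`|Bc| + `|Cc|) < c'.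
    have nb : 0 <= `|Bc| + `|Cc| by apply: addr_ge0.
    apply: (le_lt_trans (ler_wpM2r nb mu44)).
    apply: (le_lt_trans (ler_wpM2r nb mu3)).
    rewrite mulrAC ltr_pdivrMr // /D.
    move: (`|Bc| + `|Cc|) nb => z z0.
    have : 0 <= c' * z by apply: mulr_ge0 => //; exact: ltW.
    have -> : c' * (2 * (z + 1)) = 2 * (c' * z) + 2 * c' by ring.
    lra.
  have HT := @sign_T R al2 be2 N a (r ^+ 2) (xn ^+ 2) (4 * mu ^+ 2) c0 s0 (sqr_ge0 _) Hu e40 e41 e42.
  have EQ : Sq (cc (2 + delta)) x = r ^+ 2 + a * xn ^+ 2 by rewrite Sq_cc.
  have EW : Sq (fun j => cc (2 + delta) j ^+ 2) x = r ^+ 2 + a ^+ 2 * xn ^+ 2 by rewrite Sq_pow.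
  have EZ : Sq (fun j => cc (2 + delta) j ^+ 3) x = r ^+ 2 + a ^+ 3 * xn ^+ 2 by rewrite Sq_pow.
  have Q0 : 0 < Sq (cc (2 + delta)) x.
    rewrite EQ; have : 0 <= a * xn ^+ 2 by apply: mulr_ge0; [exact: ltW | exact: sqr_ge0].
    lra.
  have W0 : 0 < Sq (fun j => cc (2 + delta) j ^+ 2) x.
    rewrite EW; have : 0 <= a ^+ 2 * xn ^+ 2 by apply: mulr_ge0; exact: sqr_ge0.
    lra.
  rewrite (plap_v p g0 Q0 W0) /=.
  have K0 : 0 < gamma `^ (p - 2) * gamma by apply: mulr_gt0 => //; exact: powR_gt0.
  have P1 : 0 < gamma `^ (p - 2) * gamma * Sq (cc (2 + delta)) x `^ ((gamma / 2 - 1) * (p - 2) + (gamma / 2 - 1)) *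
       Sq (fun j => cc (2 + delta) j ^+ 2) x `^ (2^-1 * (p - 2)).
    by apply: mulr_gt0; [apply: mulr_gt0 => //|]; exact: powR_gt0.
  rewrite oppr_gt0 pmulr_rlt0 //.
  rewrite EZ; move: Q0 W0; rewrite EQ EW => Q0 W0.
  move: HT; rewrite /al2 /be2 /N /a.
  move: Q0 W0; rewrite /a; move: (r ^+ 2) (xn ^+ 2) => s0' u0' Q0 W0 HT.
  move: (2 + delta) Q0 W0 HT => A Q0 W0 HT.
  set T := (gamma - 2) * (p - 1) * _ + _ + _ in HT.
  have -> : 2 * ((gamma / 2 - 1) * (p - 2) + (gamma / 2 - 1)) *
    (s0' + A ^+ 2 * u0') / (s0' + A * u0') +
    2 * (2^-1 * (p - 2)) * (s0' + A ^+ 3 * u0') /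
    (s0' + A ^+ 2 * u0') + (m%:R + A) = T * ((s0' + A * u0') * (s0' + A ^+ 2 * u0'))^-1.
    rewrite /T; field.
    by rewrite (gt_eqF Q0) (gt_eqF W0).
  rewrite pmulr_llt0 // invr_gt0; exact: mulr_gt0.
have lam0 : forall (z : R), 0 < (Num.sqrt (1 + z ^+ 2))^-1.
  move=> z; rewrite invr_gt0 sqrtr_gt0.
  have := sqr_ge0 z; lra.
have ae : 0 < (2 + delta) * (eps / 2) by apply: mulr_gt0; lra.
have sq_case : forall y : 'rV[R]_m, 0 < sq y \/ y = 0.
  move=> y; have := sq_ge0 y; rewrite le_eqVlt => /orP [/eqP H |]; last by left.
  by right; apply: sq_eq0.
have sq00 : sq (0 : 'rV[R]_m) = 0 by rewrite /sq big1 // => j _; rewrite mxE expr0n.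
split.
  move=> x [xn r1] cl.
  have rle := closure_Omega cl.
  have rr0 : enorm (xprime x) < r0 by apply: le_lt_trans rle mk0.
  have [br Q0] : 0 < (2 + delta) * xlast x - \sum_j xprime x 0 j * partial h1 j (xprime x)
      /\ 0 < Sq (cc (2 + delta)) x.
    case: (sq_case (xprime x)) => [s0|y0].
      have TB := taylor_bd C1 h10 g10 Hq1 n1 r1 a2 (HE h1 M1 _ r1 rr0 s0) Heta s0.
      split.
        move: TB; rewrite xn mul1r /a; lra.
      rewrite Sq_cc enorm_sq; have : 0 <= (2 + delta) * xlast x ^+ 2.
        by apply: mulr_ge0; [lra | exact: sqr_ge0].
      lra.
    have S0 : \sum_j xprime x 0 j * partial h1 j (xprime x) = 0.
      by rewrite y0 big1 // => j _; rewrite mxE mul0r.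
    rewrite y0 h10 addr0 in xn.
    split; first by rewrite S0 subr0 xn.
    rewrite Sq_cc enorm_sq y0 sq00 add0r xn.
    apply: mulr_gt0; first lra.
    by apply: exprn_gt0; lra.
  rewrite dnormal_plus //.
  apply: mulr_gt0 => //; apply: mulr_gt0 => //.
  by apply: mulr_gt0 => //; exact: powR_gt0.
move=> x [xn r1] cl.
have rle := closure_Omega cl.
have rr0 : enorm (xprime x) < r0 by apply: le_lt_trans rle mk0.
have [br Q0] : 0 < \sum_j xprime x 0 j * partial h2 j (xprime x) - (2 + delta) * xlast x
    /\ 0 < Sq (cc (2 + delta)) x.
  case: (sq_case (xprime x)) => [s0|y0].
    have TB := taylor_bd C2 h20 g20 Hq2 n2 r1 a2 (HE h2 M2 _ r1 rr0 s0) Heta s0.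
    split.
      move: TB; rewrite xn mulN1r /a; lra.
    rewrite Sq_cc enorm_sq; have : 0 <= (2 + delta) * xlast x ^+ 2.
      by apply: mulr_ge0; [lra | exact: sqr_ge0].
    lra.
  have S0 : \sum_j xprime x 0 j * partial h2 j (xprime x) = 0.
    by rewrite y0 big1 // => j _; rewrite mxE mul0r.
  rewrite y0 h20 addr0 in xn.
  split; first by rewrite S0 sub0r xn; lra.
  rewrite Sq_cc enorm_sq y0 sq00 add0r xn.
  apply: mulr_gt0; first lra.
  by rewrite mulNr sqrrN; apply: exprn_gt0; lra.
rewrite dnormal_minus //.
apply: mulr_gt0 => //; apply: mulr_gt0 => //.
by apply: mulr_gt0 => //; exact: powR_gt0.
Qed.
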